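(* Let $\Omega=\Omega_1\setminus\overline{\Omega_2}$ be a doubly connected domain with $C^2$ boundary, let $d_1(w)=\operatorname{dist}(w,\partial\Omega_1)$, let $\kappa_0=\operatorname{ess\,sup}\{|\kappa_\zeta|:\zeta\in\partial\Omega_1\}$ where $\kappa_\zeta$ is the curvature of $\partial\Omega_1$ at $\zeta$, let $0<\mu<\kappa_0^{-1}$ and $\Gamma_\mu=\{w\in\Omega: d_1(w)\le\mu\}$. Let $D$ be a planar domain and $w\colon D\to\Omega$ a $(K,K')$-quasiconformal mapping, and set $\chi(z)=-d_1(w(z))$. Then for (almost) every $z\in w^{-1}(\Gamma_\mu)$ at which $w$ is differentiable, $$|\nabla\chi(z)|\le|Dw(z)|\le 2K|\nabla\chi(z)|+\sqrt{K'}.$$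
   Context: $|Dw(z)|=\max\{|Dw(z)h|:|h|=1\}=|w_z|+|w_{\bar z}|$ is the operator norm of the differential, $\|Dw\|^2=|w_x|^2+|w_y|^2=2|w_z|^2+2|w_{\bar z}|^2$, and $J(z,w)=|w_z|^2-|w_{\bar z}|^2$. A sense-preserving ACL mapping $w$ between planar domains is $(K,K')$-quasiconformal ($K\ge1$, $K'\ge0$) if $\|Dw\|^2\le 2KJ(z,w)+K'$ almost everywhere. On $\Gamma_\mu$ the function $d_1$ is $C^2$ with $|\nabla d_1|=1$. *)

(* Defs.v *)
From Stdlib Require Import Reals Lra List.
Open Scope R_scope.

Definition Pt : Type := (R * R)%type.

Definition norm2 (p : Pt) : R := sqrt (fst p ^ 2 + snd p ^ 2).
Definition dist2 (p q : Pt) : R := norm2 (fst p - fst q, snd p - snd q).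

Definition open_set (S : Pt -> Prop) : Prop :=
  forall p, S p -> exists r, 0 < r /\ forall q, dist2 p q < r -> S q.

Definition connected_set (S : Pt -> Prop) : Prop :=
  ~ (exists U V : Pt -> Prop, open_set U /\ open_set V /\
       (forall p, S p -> U p \/ V p) /\
       (exists p, S p /\ U p) /\ (exists p, S p /\ V p) /\
       (forall p, S p -> U p -> V p -> False)).

Definition domain (S : Pt -> Prop) : Prop :=
  open_set S /\ connected_set S /\ exists p, S p.

Definition bounded_set (S : Pt -> Prop) : Prop :=
  exists M, forall p, S p -> norm2 p <= M.

Definition closure (S : Pt -> Prop) (p : Pt) : Prop :=
  forall r, 0 < r -> exists q, S q /\ dist2 p q < r.

Definition boundary (S : Pt -> Prop) (p : Pt) : Prop :=
  closure S p /\ closure (fun q => ~ S q) p.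

Definition C2_fun (f f1 f2 : R -> R) : Prop :=
  (forall t, derivable_pt_lim f t (f1 t)) /\
  (forall t, derivable_pt_lim f1 t (f2 t)) /\ continuity f2.

(* a closed curve t |-> (cx t, cy t) of period T, with first and second
   derivatives (cx1,cy1), (cx2,cy2) *)
Record C2curve := mkC2curve {
  cx : R -> R; cy : R -> R;
  cx1 : R -> R; cy1 : R -> R;
  cx2 : R -> R; cy2 : R -> R;
  cperiod : R }.

Definition is_C2_jordan (c : C2curve) : Prop :=
  0 < cperiod c /\
  C2_fun (cx c) (cx1 c) (cx2 c) /\ C2_fun (cy c) (cy1 c) (cy2 c) /\
  (forall t, cx c (t + cperiod c) = cx c t /\ cy c (t + cperiod c) = cy c t) /\
  (forall s t, 0 <= s < cperiod c -> 0 <= t < cperiod c ->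
     cx c s = cx c t -> cy c s = cy c t -> s = t) /\
  (forall t, cx1 c t <> 0 \/ cy1 c t <> 0).

Definition parametrizes (c : C2curve) (B : Pt -> Prop) : Prop :=
  forall p, B p <-> exists t, p = (cx c t, cy c t).

Definition C2_jordan_domain (S : Pt -> Prop) (c : C2curve) : Prop :=
  domain S /\ bounded_set S /\ is_C2_jordan c /\ parametrizes c (boundary S).

Definition curvature (c : C2curve) (t : R) : R :=
  (cx1 c t * cy2 c t - cy1 c t * cx2 c t) /
  (sqrt (cx1 c t ^ 2 + cy1 c t ^ 2)) ^ 3.

Definition is_inf (E : R -> Prop) (m : R) : Prop :=
  (forall x, E x -> m <= x) /\ (forall b, (forall x, E x -> b <= x) -> b <= m).

Definition null1 (A : R -> Prop) : Prop :=
  forall eps, 0 < eps -> exists a b : nat -> R,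
    (forall n, a n <= b n) /\
    (forall x, A x -> exists n, a n <= x <= b n) /\
    (forall N, sum_f_R0 (fun n => b n - a n) N < eps).

Definition null2 (A : Pt -> Prop) : Prop :=
  forall eps, 0 < eps -> exists a b c d : nat -> R,
    (forall n, a n <= b n /\ c n <= d n) /\
    (forall p, A p -> exists n, a n <= fst p <= b n /\ c n <= snd p <= d n) /\
    (forall N, sum_f_R0 (fun n => (b n - a n) * (d n - c n)) N < eps).

(* l = [(s1,t1);...;(sk,tk)] with a <= s1 <= t1 <= s2 <= ... <= tk <= b *)
Fixpoint intervals_in (a b : R) (l : list (R * R)) : Prop :=
  match l with
  | nil => a <= b
  | (s, t) :: r => a <= s /\ s <= t /\ intervals_in t b r
  end.

Definition abs_cont_on (f : R -> Pt) (a b : R) : Prop :=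
  forall eps, 0 < eps -> exists delta, 0 < delta /\
    forall l, intervals_in a b l ->
      fold_right (fun st acc => snd st - fst st + acc) 0 l < delta ->
      fold_right (fun st acc => dist2 (f (snd st)) (f (fst st)) + acc) 0 l < eps.

Definition continuous_on (w : Pt -> Pt) (D : Pt -> Prop) : Prop :=
  forall z, D z -> forall eps, 0 < eps -> exists delta, 0 < delta /\
    forall q, D q -> dist2 z q < delta -> dist2 (w z) (w q) < eps.

Definition ACL (w : Pt -> Pt) (D : Pt -> Prop) : Prop :=
  continuous_on w D /\
  forall a b c d, a < b -> c < d ->
    (forall x y, a <= x <= b -> c <= y <= d -> D (x, y)) ->
    (exists N, null1 N /\ forall y, c <= y <= d -> ~ N y ->
        abs_cont_on (fun x => w (x, y)) a b) /\
    (exists N, null1 N /\ forall x, a <= x <= b -> ~ N x ->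
        abs_cont_on (fun y => w (x, y)) c d).

(* w = u + i v; ux = u_x, uy = u_y, vx = v_x, vy = v_y at z *)
Definition has_partials (w : Pt -> Pt) (z : Pt) (ux uy vx vy : R) : Prop :=
  derivable_pt_lim (fun t => fst (w (fst z + t, snd z))) 0 ux /\
  derivable_pt_lim (fun t => fst (w (fst z, snd z + t))) 0 uy /\
  derivable_pt_lim (fun t => snd (w (fst z + t, snd z))) 0 vx /\
  derivable_pt_lim (fun t => snd (w (fst z, snd z + t))) 0 vy.

Definition differentiable_at (w : Pt -> Pt) (z : Pt) (ux uy vx vy : R) : Prop :=
  forall eps, 0 < eps -> exists delta, 0 < delta /\
    forall h : Pt, norm2 h < delta ->
      dist2 (w (fst z + fst h, snd z + snd h))
            (fst (w z) + ux * fst h + uy * snd h,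
             snd (w z) + vx * fst h + vy * snd h) <= eps * norm2 h.

Definition has_gradient (f : Pt -> R) (z : Pt) (gx gy : R) : Prop :=
  forall eps, 0 < eps -> exists delta, 0 < delta /\
    forall h : Pt, norm2 h < delta ->
      Rabs (f (fst z + fst h, snd z + snd h) - f z - (gx * fst h + gy * snd h))
        <= eps * norm2 h.

(* Wirtinger derivatives: w_z = (w_x - i w_y)/2, w_zbar = (w_x + i w_y)/2 *)
Definition abs_wz (ux uy vx vy : R) : R := norm2 ((ux + vy) / 2, (vx - uy) / 2).
Definition abs_wzb (ux uy vx vy : R) : R := norm2 ((ux - vy) / 2, (vx + uy) / 2).

(* |Dw| = |w_z| + |w_zbar| (operator norm) *)
Definition opnorm (ux uy vx vy : R) : R := abs_wz ux uy vx vy + abs_wzb ux uy vx vy.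
(* ||Dw||^2 = 2|w_z|^2 + 2|w_zbar|^2 *)
Definition hsnorm_sq (ux uy vx vy : R) : R :=
  2 * abs_wz ux uy vx vy ^ 2 + 2 * abs_wzb ux uy vx vy ^ 2.
(* J(z,w) = |w_z|^2 - |w_zbar|^2 *)
Definition jac (ux uy vx vy : R) : R := abs_wz ux uy vx vy ^ 2 - abs_wzb ux uy vx vy ^ 2.

Definition KKquasiconformal (w : Pt -> Pt) (D : Pt -> Prop) (K K' : R) : Prop :=
  1 <= K /\ 0 <= K' /\ ACL w D /\
  exists N, null2 N /\ forall z, D z -> ~ N z ->
    exists ux uy vx vy, has_partials w z ux uy vx vy /\
      0 <= jac ux uy vx vy /\
      hsnorm_sq ux uy vx vy <= 2 * K * jac ux uy vx vy + K'.

(* Main.v *)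
Require Import Defs.
From Stdlib Require Import Reals Lra List Classical.
Open Scope R_scope.


Lemma sq_le x y : 0 <= y -> x^2 <= y^2 -> x <= y.
Proof. intros; nra. Qed.

Lemma norm2_nonneg p : 0 <= norm2 p.
Proof. apply sqrt_pos. Qed.

Lemma norm2_sq x y : norm2 (x,y) ^ 2 = x^2 + y^2.
Proof. unfold norm2; simpl fst; simpl snd. apply pow2_sqrt. nra. Qed.

Lemma comp1 x y : Rabs x <= norm2 (x,y).
Proof. apply sq_le. apply norm2_nonneg. rewrite norm2_sq.
  replace (Rabs x ^2) with (x^2).
  nra. rewrite <- !Rsqr_pow2. apply Rsqr_abs. Qed.

Lemma comp2 x y : Rabs y <= norm2 (x,y).
Proof. apply sq_le. apply norm2_nonneg. rewrite norm2_sq.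
  replace (Rabs y ^2) with (y^2). nra. rewrite <- !Rsqr_pow2. apply Rsqr_abs. Qed.

Lemma CS x1 y1 x2 y2 : x1*x2 + y1*y2 <= norm2 (x1,y1) * norm2 (x2,y2).
Proof. apply sq_le. apply Rmult_le_pos; apply norm2_nonneg.
  rewrite Rpow_mult_distr, !norm2_sq. idtac.
  pose proof (pow2_ge_0 (x1*y2 - x2*y1)).
  replace ((x1 ^ 2 + y1 ^ 2) * (x2 ^ 2 + y2 ^ 2)) with ((x1*x2+y1*y2)^2 + (x1*y2 - x2*y1)^2) by ring. lra. Qed.

Lemma norm2_tri x1 y1 x2 y2 : norm2 (x1+x2, y1+y2) <= norm2 (x1,y1) + norm2 (x2,y2).
Proof. apply sq_le. pose proof (norm2_nonneg (x1,y1)); pose proof (norm2_nonneg (x2,y2)); lra.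
  pose proof (CS x1 y1 x2 y2).
  replace ((norm2 (x1, y1) + norm2 (x2, y2)) ^ 2) with
   (norm2 (x1,y1)^2 + norm2 (x2,y2)^2 + 2 * (norm2 (x1,y1) * norm2 (x2,y2))) by ring.
  rewrite !norm2_sq. nra. Qed.

Lemma norm2_scale s x y : norm2 (s*x, s*y) = Rabs s * norm2 (x,y).
Proof. assert (H: 0 <= Rabs s * norm2 (x,y)) by (apply Rmult_le_pos; [apply Rabs_pos|apply norm2_nonneg]).
  pose proof (norm2_nonneg (s*x,s*y)).
  assert (E: norm2 (s*x,s*y)^2 = (Rabs s * norm2 (x,y))^2).
  { rewrite Rpow_mult_distr, !norm2_sq. replace (Rabs s ^2) with (s^2). ring.
    rewrite <- !Rsqr_pow2. apply Rsqr_abs. }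
  nra. Qed.

Lemma dist2_tri p q r : dist2 p r <= dist2 p q + dist2 q r.
Proof. unfold dist2. replace (fst p - fst r) with ((fst p - fst q) + (fst q - fst r)) by ring.
  replace (snd p - snd r) with ((snd p - snd q) + (snd q - snd r)) by ring. apply norm2_tri. Qed.

Lemma dist2_sym p q : dist2 p q = dist2 q p.
Proof. unfold dist2. replace (fst q - fst p) with (-1 * (fst p - fst q)) by ring.
  replace (snd q - snd p) with (-1 * (snd p - snd q)) by ring. rewrite norm2_scale.
  replace (Rabs (-1)) with 1. ring. rewrite Rabs_left; lra. Qed.

Lemma eps_le x y : (forall e, 0 < e -> x <= y + e) -> x <= y.
Proof. intros H. destruct (Rle_or_lt x y) as [|Hl]; auto.
  specialize (H ((x-y)/2) ltac:(lra)). lra. Qed.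

Lemma mat_sq ux uy vx vy x y :
  let a := abs_wz ux uy vx vy in let b := abs_wzb ux uy vx vy in
  (a - b)^2 * norm2 (x,y)^2 <= norm2 (ux*x+uy*y, vx*x+vy*y)^2 /\
  norm2 (ux*x+uy*y, vx*x+vy*y)^2 <= (a + b)^2 * norm2 (x,y)^2.
Proof.
  intros a b.
  assert (Ha : a^2 = ((ux+vy)/2)^2 + ((vx-uy)/2)^2) by (apply norm2_sq).
  assert (Hb : b^2 = ((ux-vy)/2)^2 + ((vx+uy)/2)^2) by (apply norm2_sq).
  assert (Ha0 : 0 <= a) by apply norm2_nonneg.
  assert (Hb0 : 0 <= b) by apply norm2_nonneg.
  rewrite !norm2_sq.
  set (al := (ux+vy)/2) in *. set (be := (vx-uy)/2) in *.
  set (ga := (ux-vy)/2) in *. set (de := (vx+uy)/2) in *.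
  set (X := (al*ga+be*de)*(x^2-y^2) - (be*ga-al*de)*(2*x*y)).
  set (Y := (al*ga+be*de)*(2*x*y) + (be*ga-al*de)*(x^2-y^2)).
  assert (E1 : (ux*x+uy*y)^2 + (vx*x+vy*y)^2 = (a^2+b^2)*(x^2+y^2) + 2*X).
  { rewrite Ha, Hb. unfold X, al, be, ga, de. field. }
  assert (E2 : X^2 + Y^2 = (a^2*b^2)*(x^2+y^2)^2).
  { rewrite Ha, Hb. unfold X, Y, al, be, ga, de. field. }
  assert (HX : Rabs X <= a*b*(x^2+y^2)).
  { apply sq_le. pose proof (pow2_ge_0 x); pose proof (pow2_ge_0 y).
    apply Rmult_le_pos; [apply Rmult_le_pos|]; lra.
    replace (Rabs X ^2) with (X^2) by (rewrite <- !Rsqr_pow2; apply Rsqr_abs).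
    pose proof (pow2_ge_0 Y). replace ((a*b*(x^2+y^2))^2) with (a^2*b^2*(x^2+y^2)^2) by ring. lra. }
  pose proof (Rle_abs X). pose proof (Rle_abs (-X)). rewrite Rabs_Ropp in *.
  split; rewrite E1.
  - replace ((a-b)^2*(x^2+y^2)) with ((a^2+b^2)*(x^2+y^2) - 2*(a*b*(x^2+y^2))) by ring. lra.
  - replace ((a+b)^2*(x^2+y^2)) with ((a^2+b^2)*(x^2+y^2) + 2*(a*b*(x^2+y^2))) by ring. lra.
Qed.

Lemma mat_upper ux uy vx vy x y :
  norm2 (ux*x+uy*y, vx*x+vy*y) <= opnorm ux uy vx vy * norm2 (x,y).
Proof.
  destruct (mat_sq ux uy vx vy x y) as [_ H]. apply sq_le.
  apply Rmult_le_pos; [|apply norm2_nonneg]. unfold opnorm.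
  pose proof (norm2_nonneg ((ux + vy) / 2, (vx - uy) / 2)).
  pose proof (norm2_nonneg ((ux - vy) / 2, (vx + uy) / 2)). unfold abs_wz, abs_wzb. lra.
  rewrite Rpow_mult_distr. exact H.
Qed.

Lemma mat_lower ux uy vx vy x y :
  (abs_wz ux uy vx vy - abs_wzb ux uy vx vy) * norm2 (x,y) <= norm2 (ux*x+uy*y, vx*x+vy*y).
Proof.
  destruct (mat_sq ux uy vx vy x y) as [H _].
  destruct (Rle_or_lt (abs_wz ux uy vx vy - abs_wzb ux uy vx vy) 0) as [Hn|Hp].
  - pose proof (norm2_nonneg (x,y)). pose proof (norm2_nonneg (ux*x+uy*y, vx*x+vy*y)).
    pose proof (Rmult_le_compat_r _ _ _ H0 Hn). lra.
  - apply sq_le. apply norm2_nonneg. rewrite Rpow_mult_distr. exact H.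
Qed.

Lemma jac_det ux uy vx vy : jac ux uy vx vy = ux*vy - uy*vx.
Proof. unfold jac, abs_wz, abs_wzb. rewrite !norm2_sq. field. Qed.

Lemma dpl_of_bound (f : R -> R) l :
  (forall eps, 0 < eps -> exists d, 0 < d /\ forall h, h <> 0 -> Rabs h < d ->
     Rabs (f h - f 0 - l*h) <= eps * Rabs h) -> derivable_pt_lim f 0 l.
Proof.
  intros H eps He. destruct (H (eps/2) ltac:(lra)) as [d [Hd Hb]].
  exists (mkposreal d Hd). intros h Hh Hhd. simpl in Hhd.
  rewrite Rplus_0_l.
  replace ((f h - f 0)/h - l) with ((f h - f 0 - l*h) * / h) by (field; auto).
  rewrite Rabs_mult, Rabs_inv.
  specialize (Hb h Hh Hhd). assert (0 < Rabs h) by (apply Rabs_pos_lt; auto).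
  apply Rle_lt_trans with (eps/2 * Rabs h * / Rabs h).
  apply Rmult_le_compat_r; [left; apply Rinv_0_lt_compat; auto| auto].
  field_simplify; lra.
Qed.

Lemma norm2_x h : norm2 (h, 0) = Rabs h.
Proof. replace (h,0) with (h*1, h*0) by (f_equal; ring). rewrite norm2_scale.
  unfold norm2; simpl. replace (1*(1*1) + 0*(0*1)) with 1 by ring. rewrite sqrt_1. ring. Qed.
Lemma norm2_y h : norm2 (0, h) = Rabs h.
Proof. replace (0,h) with (h*0, h*1) by (f_equal; ring). rewrite norm2_scale.
  unfold norm2; simpl. replace (0*(0*1) + 1*(1*1)) with 1 by ring. rewrite sqrt_1. ring. Qed.

Lemma diff_partials w z ux uy vx vy :
  differentiable_at w z ux uy vx vy -> has_partials w z ux uy vx vy.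
Proof.
  destruct z as [z1 z2]. intros Hd.
  repeat split; apply dpl_of_bound; intros eps He; destruct (Hd eps He) as [d [Hd0 Hb]];
    exists d; split; auto; intros h Hh Hhd; simpl.
  - specialize (Hb (h,0)). rewrite norm2_x in Hb. specialize (Hb Hhd). simpl in Hb.
    replace (z2+0) with z2 in Hb by ring. replace (z1+0) with z1 by ring.
    eapply Rle_trans; [|exact Hb]. unfold dist2. simpl.
    eapply Rle_trans; [|apply comp1]. right. f_equal. ring.
  - specialize (Hb (0,h)). rewrite norm2_y in Hb. specialize (Hb Hhd). simpl in Hb.
    replace (z1+0) with z1 in Hb by ring. replace (z2+0) with z2 by ring.
    eapply Rle_trans; [|exact Hb]. unfold dist2. simpl.
    eapply Rle_trans; [|apply comp1]. right. f_equal. ring.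
  - specialize (Hb (h,0)). rewrite norm2_x in Hb. specialize (Hb Hhd). simpl in Hb.
    replace (z2+0) with z2 in Hb by ring. replace (z1+0) with z1 by ring.
    eapply Rle_trans; [|exact Hb]. unfold dist2. simpl.
    eapply Rle_trans; [|apply comp2]. right. f_equal. ring.
  - specialize (Hb (0,h)). rewrite norm2_y in Hb. specialize (Hb Hhd). simpl in Hb.
    replace (z1+0) with z1 in Hb by ring. replace (z2+0) with z2 by ring.
    eapply Rle_trans; [|exact Hb]. unfold dist2. simpl.
    eapply Rle_trans; [|apply comp2]. right. f_equal. ring.
Qed.

Lemma opnorm_nonneg ux uy vx vy : 0 <= opnorm ux uy vx vy.
Proof. unfold opnorm, abs_wz, abs_wzb. pose proof (norm2_nonneg ((ux + vy) / 2, (vx - uy) / 2)).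
  pose proof (norm2_nonneg ((ux - vy) / 2, (vx + uy) / 2)). lra. Qed.

Lemma core_upper (w : Pt -> Pt) (f : Pt -> R) z1 z2 ux uy vx vy gx gy :
  (forall p p', f p' <= f p + dist2 p p') ->
  differentiable_at w (z1,z2) ux uy vx vy ->
  has_gradient (fun y => - f (w y)) (z1,z2) gx gy ->
  norm2 (gx,gy) <= opnorm ux uy vx vy.
Proof.
  intros Hlip Hd Hg.
  set (G := norm2 (gx,gy)). pose proof (norm2_nonneg (gx,gy)) as HG0. fold G in HG0.
  pose proof (opnorm_nonneg ux uy vx vy).
  destruct (Req_dec G 0) as [HG|HG]. { rewrite HG; auto. }
  assert (HGp : 0 < G) by lra.
  assert (HGsq : G^2 = gx^2+gy^2) by apply norm2_sq.
  apply eps_le. intros e He.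
  destruct (Hd (e/2) ltac:(lra)) as [d1 [Hd1 Hb1]].
  destruct (Hg (e/2) ltac:(lra)) as [d2 [Hd2 Hb2]].
  set (t := Rmin d1 d2 / 2).
  assert (Ht : 0 < t) by (unfold t; pose proof (Rmin_glb_lt d1 d2 0 Hd1 Hd2); lra).
  assert (Htd1 : t < d1) by (unfold t; pose proof (Rmin_l d1 d2); lra).
  assert (Htd2 : t < d2) by (unfold t; pose proof (Rmin_r d1 d2); lra).
  set (h := (t/G*gx, t/G*gy)).
  assert (Hh : norm2 h = t).
  { unfold h. rewrite norm2_scale. fold G. rewrite Rabs_pos_eq. field; lra.
    apply Rmult_le_pos; [lra|left; apply Rinv_0_lt_compat; lra]. }
  specialize (Hb1 h ltac:(lra)). specialize (Hb2 h ltac:(lra)).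
  rewrite Hh in Hb1, Hb2. simpl in Hb1, Hb2.
  set (p := w (z1,z2)) in *.
  set (q := w (z1 + t/G*gx, z2 + t/G*gy)) in *.
  assert (Edot : gx * (t/G*gx) + gy * (t/G*gy) = t * G).
  { transitivity (t / G * (gx^2+gy^2)); [field; lra|]. rewrite <- HGsq. field. lra. }
  rewrite Edot in Hb2.
  pose proof (Hlip q p) as L1.
  set (r := (fst p + ux * (t / G * gx) + uy * (t / G * gy),
             snd p + vx * (t / G * gx) + vy * (t / G * gy))) in *.
  pose proof (dist2_tri q r p) as L2.
  assert (L3 : dist2 r p <= opnorm ux uy vx vy * t).
  { rewrite <- Hh. unfold dist2, r, h. simpl.
    replace (fst p + ux * (t / G * gx) + uy * (t / G * gy) - fst p) with
      (ux * (t / G * gx) + uy * (t / G * gy)) by ring.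
    replace (snd p + vx * (t / G * gx) + vy * (t / G * gy) - snd p) with
      (vx * (t / G * gx) + vy * (t / G * gy)) by ring.
    apply mat_upper. }
  pose proof (Rle_abs (- f q - - f p - t * G)) as L4.
  pose proof (Rle_abs (- (- f q - - f p - t * G))) as L5. rewrite Rabs_Ropp in L5. assert (G * t <= (opnorm ux uy vx vy + e) * t) by lra.
  apply Rmult_le_reg_r in H0; lra.
Qed.

Lemma core_lower (w : Pt -> Pt) (f : Pt -> R) z1 z2 ux uy vx vy gx gy :
  (forall p p', f p' <= f p + dist2 p p') ->
  0 < f (w (z1,z2)) ->
  (forall eta, 0 < eta -> exists q, dist2 (w (z1,z2)) q <= f (w (z1,z2)) + eta /\
       forall r, f r <= dist2 r q) ->
  differentiable_at w (z1,z2) ux uy vx vy ->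
  has_gradient (fun y => - f (w y)) (z1,z2) gx gy ->
  0 < abs_wz ux uy vx vy - abs_wzb ux uy vx vy ->
  abs_wz ux uy vx vy - abs_wzb ux uy vx vy <= norm2 (gx,gy).
Proof.
  intros Hlip Hf Hnear Hd Hg Hl.
  set (l := abs_wz ux uy vx vy - abs_wzb ux uy vx vy) in *.
  set (G := norm2 (gx,gy)). pose proof (norm2_nonneg (gx,gy)) as HG0. fold G in HG0.
  set (det := ux*vy - uy*vx).
  assert (Hdet : 0 < det).
  { unfold det. rewrite <- jac_det. unfold jac.
    pose proof (norm2_nonneg ((ux + vy) / 2, (vx - uy) / 2)).
    pose proof (norm2_nonneg ((ux - vy) / 2, (vx + uy) / 2)).
    unfold l, abs_wz, abs_wzb in *. nra. }
  set (p := w (z1,z2)) in *.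
  apply eps_le. intros e He.
  set (eps := e / (l+2)).
  assert (Heps : 0 < eps) by (unfold eps; apply Rdiv_lt_0_compat; lra).
  assert (Heps2 : eps * (l+2) = e) by (unfold eps; field; lra).
  destruct (Hd eps Heps) as [d1 [Hd1 Hb1]].
  destruct (Hg eps Heps) as [d2 [Hd2 Hb2]].
  set (s := Rmin (f p) (Rmin (d1*l) (d2*l)) / 2).
  assert (Hm1 := Rmin_l (f p) (Rmin (d1*l) (d2*l))).
  assert (Hm2 := Rmin_r (f p) (Rmin (d1*l) (d2*l))).
  assert (Hm3 := Rmin_l (d1*l) (d2*l)).
  assert (Hm4 := Rmin_r (d1*l) (d2*l)).
  assert (Hdl1 : 0 < d1*l) by (apply Rmult_lt_0_compat; lra).
  assert (Hdl2 : 0 < d2*l) by (apply Rmult_lt_0_compat; lra).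
  assert (Hm5 := Rmin_glb_lt (d1*l) (d2*l) 0 Hdl1 Hdl2).
  assert (Hm6 := Rmin_glb_lt (f p) (Rmin (d1*l) (d2*l)) 0 Hf Hm5).
  assert (Hs : 0 < s) by (unfold s; lra).
  assert (Hsf : s < f p) by (unfold s; lra).
  assert (Hs1 : s < d1*l) by (unfold s; lra).
  assert (Hs2 : s < d2*l) by (unfold s; lra).
  destruct (Hnear (s*eps) ltac:(apply Rmult_lt_0_compat; lra)) as [q [Hq1 Hq2]].
  set (D0 := dist2 p q).
  assert (HD0 : f p <= D0) by (unfold D0; apply Hq2).
  set (c := - s / D0).
  set (t1 := c * (fst p - fst q)). set (t2 := c * (snd p - snd q)).
  assert (Ht : norm2 (t1,t2) = s).
  { unfold t1, t2. rewrite norm2_scale. fold (dist2 p q). fold D0.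
    unfold c. rewrite Rabs_left. field. lra.
    unfold Rdiv. rewrite <- Ropp_mult_distr_l. apply Ropp_lt_gt_0_contravar.
    apply Rmult_lt_0_compat; [lra| apply Rinv_0_lt_compat; lra]. }
  assert (Hdet' : ux*vy - uy*vx <> 0) by (unfold det in Hdet; lra).
  set (h1 := (vy*t1 - uy*t2)/det). set (h2 := (-vx*t1 + ux*t2)/det).
  assert (EM1 : ux*h1 + uy*h2 = t1) by (unfold h1, h2, det; field; exact Hdet').
  assert (EM2 : vx*h1 + vy*h2 = t2) by (unfold h1, h2, det; field; exact Hdet').
  assert (Hh : l * norm2 (h1,h2) <= s).
  { rewrite <- Ht, <- EM1, <- EM2. apply mat_lower. }
  pose proof (norm2_nonneg (h1,h2)) as Hh0.
  assert (Hhs : norm2 (h1,h2) <= s / l).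
  { apply Rmult_le_reg_l with l; [lra|]. replace (l * (s/l)) with s by (field; lra). lra. }
  assert (Hhd1 : norm2 (h1,h2) < d1).
  { apply Rle_lt_trans with (s/l); auto. apply Rmult_lt_reg_l with l; [lra|].
    replace (l * (s/l)) with s by (field; lra). lra. }
  assert (Hhd2 : norm2 (h1,h2) < d2).
  { apply Rle_lt_trans with (s/l); auto. apply Rmult_lt_reg_l with l; [lra|].
    replace (l * (s/l)) with s by (field; lra). lra. }
  specialize (Hb1 (h1,h2) Hhd1). specialize (Hb2 (h1,h2) Hhd2). simpl in Hb1, Hb2.
  fold p in Hb1, Hb2.
  rewrite !Rplus_assoc, EM1, EM2 in Hb1.
  set (wh := w (z1 + h1, z2 + h2)) in *.
  set (r := (fst p + t1, snd p + t2)) in *.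
  assert (Hr : dist2 r q = D0 - s).
  { unfold dist2, r, t1, t2. simpl.
    replace (fst p + c * (fst p - fst q) - fst q) with ((1 + c) * (fst p - fst q)) by ring.
    replace (snd p + c * (snd p - snd q) - snd q) with ((1 + c) * (snd p - snd q)) by ring.
    rewrite norm2_scale. fold (dist2 p q). fold D0. unfold c.
    rewrite Rabs_pos_eq. field. lra.
    replace (1 + - s / D0) with ((D0 - s) / D0) by (field; lra).
    apply Rmult_le_pos; [lra|left; apply Rinv_0_lt_compat; lra]. }
  pose proof (Hlip r wh) as L1. rewrite dist2_sym in Hb1. pose proof (Hq2 r) as L2.
  pose proof (Rle_abs (- f wh - - f p - (gx * h1 + gy * h2))) as L3.
  pose proof (CS gx gy h1 h2) as L4. fold G in L4.
  set (nh := norm2 (h1,h2)) in *.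
  fold D0 in Hq1. assert (A : s * (1 - eps) <= (2*eps + G) * nh) by lra.
  assert (B : l * (s * (1 - eps)) <= (2*eps + G) * (l * nh)).
  { replace ((2*eps + G) * (l*nh)) with (l * ((2*eps+G)*nh)) by ring.
    apply Rmult_le_compat_l; lra. }
  assert (C : (2*eps + G) * (l * nh) <= (2*eps+G) * s).
  { apply Rmult_le_compat_l; lra. }
  assert (l * s <= (G + e) * s) by nra.
  apply Rmult_le_reg_r in H; lra.
Qed.

Lemma final_arith a b G K K' : 0 <= a -> 0 <= b -> 0 <= a - b -> a - b <= G -> 1 <= K -> 0 <= K' ->
  2*a^2 + 2*b^2 <= 2*K*(a^2-b^2) + K' -> a + b <= 2*K*G + sqrt K'.
Proof.
  intros Ha Hb Hl HlG HK HK' Hq.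
  set (S := sqrt K'). assert (HS : S^2 = K') by (apply pow2_sqrt; auto).
  assert (HS0 : 0 <= S) by apply sqrt_pos.
  set (L := a + b). set (l := a - b).
  assert (E : L^2 + l^2 <= 2*K*L*l + K') by (unfold L, l; replace ((a+b)^2 + (a-b)^2) with (2*a^2+2*b^2) by ring;
      replace (2*K*(a+b)*(a-b)) with (2*K*(a^2-b^2)) by ring; lra).
  destruct (Rle_or_lt L (2*K*G + S)) as [|Hc]; auto. exfalso.
  assert (H1 : 2*K*l <= 2*K*G) by (apply Rmult_le_compat_l; [lra|exact HlG]).
  assert (H2 : 2*K*l + S < L) by lra.
  assert (H0l : 0 <= 2*K*l) by (apply Rmult_le_pos; [lra|exact Hl]).
  assert (H3 : S <= L) by lra.
  assert (H4 : L * (2*K*l + S) < L * L) by (apply Rmult_lt_compat_l; lra).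
  assert (H5 : S * S <= L * S) by (apply Rmult_le_compat_r; lra).
  assert (0 <= l^2) by apply pow2_ge_0.
  nra.
Qed.

Lemma d1_lip (B : Pt -> Prop) (d1 : Pt -> R)
  (Hd1 : forall p, is_inf (fun r => exists q, B q /\ r = dist2 p q) (d1 p)) :
  forall p p', d1 p' <= d1 p + dist2 p p'.
Proof.
  intros p p'. destruct (Hd1 p) as [_ H2]. destruct (Hd1 p') as [H1 _].
  assert (d1 p' - dist2 p p' <= d1 p); [|lra].
  apply H2. intros x [q [Hq ->]].
  pose proof (H1 _ (ex_intro _ q (conj Hq eq_refl))).
  pose proof (dist2_tri p' p q). rewrite (dist2_sym p' p) in H0. lra.
Qed.

Lemma d1_near (B : Pt -> Prop) (d1 : Pt -> R)
  (Hd1 : forall p, is_inf (fun r => exists q, B q /\ r = dist2 p q) (d1 p)) :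
  forall p eta, 0 < eta -> exists q, dist2 p q <= d1 p + eta /\ forall r, d1 r <= dist2 r q.
Proof.
  intros p eta He.
  destruct (classic (exists q, B q /\ dist2 p q <= d1 p + eta)) as [[q [Bq Hq]]|Hn].
  - exists q. split; auto. intros r. destruct (Hd1 r) as [H1 _]. apply H1. eauto.
  - exfalso. destruct (Hd1 p) as [_ H2].
    assert (d1 p + eta <= d1 p); [|lra].
    apply H2. intros x [q [Bq ->]].
    destruct (Rle_or_lt (d1 p + eta) (dist2 p q)) as [|Hl]; auto.
    exfalso; apply Hn; exists q; split; auto; lra.
Qed.

Lemma d1_pos (Om : Pt -> Prop) (d1 : Pt -> R)
  (Hd1 : forall p, is_inf (fun r => exists q, boundary Om q /\ r = dist2 p q) (d1 p)) :
  Defs.open_set Om -> forall p, Om p -> 0 < d1 p.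
Proof.
  intros HO p Omp. destruct (HO p Omp) as [r [Hr Hball]].
  destruct (Hd1 p) as [_ H2].
  apply Rlt_le_trans with r; auto. apply H2. intros x [q [[_ Bq] ->]].
  destruct (Rle_or_lt r (dist2 p q)) as [|Hl]; auto. exfalso.
  assert (Omq : Om q) by auto.
  destruct (HO q Omq) as [r' [Hr' Hb']].
  destruct (Bq r' Hr') as [q' [nq' Hq']]. apply nq'. auto.
Qed.

Theorem lemma3p2
  (Omega1 Omega2 : Pt -> Prop) (gamma1 gamma2 : C2curve)
  (HO1 : C2_jordan_domain Omega1 gamma1)
  (HO2 : C2_jordan_domain Omega2 gamma2)
  (Hsub : forall p, closure Omega2 p -> Omega1 p)
  (d1 : Pt -> R)
  (Hd1 : forall p, is_inf (fun r => exists q, boundary Omega1 q /\ r = dist2 p q) (d1 p))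
  (kappa0 : R)
  (Hkappa0 : is_lub (fun k => exists t, k = Rabs (curvature gamma1 t)) kappa0)
  (mu : R) (Hmu0 : 0 < mu) (Hmu1 : mu < / kappa0)
  (D : Pt -> Prop) (HD : domain D)
  (w : Pt -> Pt) (K K' : R)
  (Hw : KKquasiconformal w D K K')
  (HwOmega : forall z, D z -> Omega1 (w z) /\ ~ closure Omega2 (w z)) :
  exists N : Pt -> Prop, null2 N /\
    forall (z : Pt) (ux uy vx vy gx gy : R),
      D z -> ~ N z ->
      (Omega1 (w z) /\ ~ closure Omega2 (w z)) -> d1 (w z) <= mu ->
      differentiable_at w z ux uy vx vy ->
      has_gradient (fun y => - d1 (w y)) z gx gy ->
      norm2 (gx, gy) <= opnorm ux uy vx vy /\
      opnorm ux uy vx vy <= 2 * K * norm2 (gx, gy) + sqrt K'.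
Proof.
  destruct Hw as [HK [HK' [_ [N [HN HNp]]]]]. exists N. split; [exact HN|].
  intros [z1 z2] ux uy vx vy gx gy Dz Nz Hin _ Hdiff Hgrad.
  pose proof (d1_lip _ d1 Hd1) as Hlip.
  split.
  - eapply core_upper; eauto.
  - destruct (HNp _ Dz Nz) as [ux' [uy' [vx' [vy' [Hp [Hj Hq]]]]]].
    pose proof (diff_partials _ _ _ _ _ _ Hdiff) as Hp2.
    destruct Hp as [P1 [P2 [P3 P4]]]. destruct Hp2 as [Q1 [Q2 [Q3 Q4]]].
    pose proof (uniqueness_limite _ _ _ _ P1 Q1).
    pose proof (uniqueness_limite _ _ _ _ P2 Q2).
    pose proof (uniqueness_limite _ _ _ _ P3 Q3).
    pose proof (uniqueness_limite _ _ _ _ P4 Q4). subst.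
    set (a := abs_wz ux uy vx vy) in *. set (b := abs_wzb ux uy vx vy) in *.
    assert (Ha : 0 <= a) by apply norm2_nonneg.
    assert (Hb : 0 <= b) by apply norm2_nonneg.
    unfold jac, hsnorm_sq in *. fold a b in Hj, Hq.
    assert (Hl : 0 <= a - b) by nra.
    assert (HlG : a - b <= norm2 (gx,gy)).
    { destruct (Rle_or_lt (a - b) 0) as [Hn|Hp].
      - pose proof (norm2_nonneg (gx,gy)). lra.
      - destruct HO1 as [[HOo _] _].
        eapply core_lower; eauto.
        + apply (d1_pos Omega1 d1 Hd1 HOo). apply Hin.
        + intros eta He. apply (d1_near _ d1 Hd1 _ eta He). }
    unfold opnorm. fold a b. apply final_arith; auto.
Qed.
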